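(* Let $n\ge 2$, let $A\in\mathbb{R}^{n\times n}$ be symmetric positive definite, $B=A^{1/2}$, and $E=\{x\in\mathbb{R}^n: x^{\top}A^{-1}x=1\}$. For every parallelepiped $P$ inscribed in $E$, \[ L(P)\ \le\ L_{\max}(E):=2^{n}\sqrt{\operatorname{tr}(A)}. \] Equality holds if and only if the edge vectors of $P$ are $v_i=\lambda_iBu_i$ where $U=[u_1\ \cdots\ u_n]\in O(n)$, $\lambda_i>0$, $\sum_i\lambda_i^2=4$, and \[ \lambda_i\ \propto\ \sqrt{u_i^{\top}A\,u_i}\qquad(i=1,\dots,n). \] In particular, for any $U\in O(n)$ the choice \[ \lambda_i=\frac{2\,\sqrt{u_i^{\top}A\,u_i}}{\sqrt{\operatorname{tr}(A)}} \] yields a parallelepiped with edge vectors $v_i=\lambda_iBu_i$ that is inscribed in $E$ and attains $L(P)=L_{\max}(E)$.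
   Context: A (centred, $n$-dimensional) parallelepiped with linearly independent edge vectors $v_1,\dots,v_n\in\mathbb{R}^n$ is $P=\{\sum_{i=1}^n t_iv_i : |t_i|\le \tfrac12\}$; its $2^n$ vertices are $\tfrac12\sum_i\varepsilon_iv_i$, $\varepsilon\in\{\pm1\}^n$. $P$ is inscribed in $E$ if all its vertices satisfy $x^{\top}A^{-1}x=1$. The total edge length (total $1$-dimensional measure of the $1$-skeleton) is $L(P)=2^{n-1}\sum_{i=1}^n\|v_i\|$. *)

(* Defs.v *)
From HB Require Import structures.
From mathcomp Require Import all_boot all_order all_algebra.
From mathcomp Require Import reals.
Set Implicit Arguments. Unset Strict Implicit. Unset Printing Implicit Defensive.
Import Order.TTheory GRing.Theory Num.Theory.
Local Open Scope ring_scope.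

Section Defs.
Variables (R : realType) (n : nat).

Definition qform (M : 'M[R]_n) (x : 'cV[R]_n) : R := (x^T *m M *m x) 0 0.

Definition enorm (x : 'cV[R]_n) : R := Num.sqrt ((x^T *m x) 0 0).

Definition sym_posdef (M : 'M[R]_n) : Prop :=
  M^T = M /\ forall x : 'cV[R]_n, x != 0 -> 0 < qform M x.

Definition orthogonal_mx (U : 'M[R]_n) : Prop := U^T *m U = 1%:M.

(* The parallelepiped P is given by the matrix V whose i-th column is the
   edge vector v_i; linear independence of the v_i is V \in unitmx. *)
Definition edge (V : 'M[R]_n) (i : 'I_n) : 'cV[R]_n := col i V.

Definition sgn (b : bool) : R := if b then 1 else -1.

Definition vertex (V : 'M[R]_n) (e : 'I_n -> bool) : 'cV[R]_n :=
  2^-1 *: \sum_(i < n) sgn (e i) *: edge V i.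

Definition inscribed (A V : 'M[R]_n) : Prop :=
  forall e : 'I_n -> bool, qform (invmx A) (vertex V e) = 1.

Definition edge_length (V : 'M[R]_n) : R :=
  2 ^+ n.-1 * \sum_(i < n) enorm (edge V i).

Definition Lmax (A : 'M[R]_n) : R := 2 ^+ n * Num.sqrt (\tr A).

End Defs.

(* Main.v *)
Require Import Defs.
From HB Require Import structures.
From mathcomp Require Import all_boot all_order all_algebra.
From mathcomp Require Import reals ring lra.
Set Implicit Arguments. Unset Strict Implicit.
Import Order.TTheory GRing.Theory Num.Theory.
Local Open Scope ring_scope.

Definition bil (R : realType) (n : nat) (G : 'M[R]_n) (x y : 'cV[R]_n) : R :=
  (x^T *m G *m y) 0 0.

Arguments bil {R n}.

Lemma bil_expand (R : realType) (n : nat) (G : 'M[R]_n) (x y : 'cV[R]_n) :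
  bil G x y = \sum_k \sum_l x k 0 * G k l * y l 0.
Proof.
rewrite /bil !mxE exchange_big /=; apply: eq_bigr => l _.
rewrite !mxE mulr_suml; apply: eq_bigr => k _; by rewrite !mxE.
Qed.

Lemma bilDl (R : realType) (n : nat) (G : 'M[R]_n) (x y z : 'cV[R]_n) :
  bil G (x + y) z = bil G x z + bil G y z.
Proof. by rewrite /bil linearD /= !mulmxDl mxE. Qed.

Lemma bilDr (R : realType) (n : nat) (G : 'M[R]_n) (x y z : 'cV[R]_n) :
  bil G z (x + y) = bil G z x + bil G z y.
Proof. by rewrite /bil !mulmxDr mxE. Qed.

Lemma bilZl (R : realType) (n : nat) (G : 'M[R]_n) (c : R) (x z : 'cV[R]_n) :
  bil G (c *: x) z = c * bil G x z.
Proof. by rewrite /bil linearZ /= -!scalemxAl mxE. Qed.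

Lemma bilZr (R : realType) (n : nat) (G : 'M[R]_n) (c : R) (x z : 'cV[R]_n) :
  bil G z (c *: x) = c * bil G z x.
Proof. by rewrite /bil -!scalemxAr mxE. Qed.

Lemma bil_delta (R : realType) (n : nat) (G : 'M[R]_n) (i j : 'I_n) :
  bil G (delta_mx i 0) (delta_mx j 0) = G i j.
Proof.
rewrite bil_expand (bigD1 i) //= [\sum_(k | k != i) _]big1 ?addr0; last first.
  move=> k kn; apply: big1 => l _; by rewrite !mxE (negbTE kn) /= !mul0r.
rewrite (bigD1 j) //= [\sum_(l | l != j) _]big1 ?addr0; last first.
  move=> l ln; by rewrite !mxE (negbTE ln) /= !mulr0.
by rewrite !mxE !eqxx /= mul1r mulr1.
Qed.

Lemma bil_diag (R : realType) (n : nat) (G : 'M[R]_n) (x : 'cV[R]_n) :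
  (forall k l, k != l -> G k l = 0) ->
  bil G x x = \sum_k x k 0 ^+ 2 * G k k.
Proof.
move=> Hd; rewrite bil_expand; apply: eq_bigr => k _.
rewrite (bigD1 k) //= [\sum_(l | l != k) _]big1 ?addr0; first by rewrite expr2; ring.
by move=> l lk; rewrite Hd 1?eq_sym // mulr0 mul0r.
Qed.

Lemma posdef_unit (R : realType) (n : nat) (M : 'M[R]_n) :
  sym_posdef M -> M \in unitmx.
Proof.
case=> _ HM; rewrite unitmxE unitfE; apply/negP => /det0P [v v0 vM].
have := HM v^T; rewrite trmx_eq0 v0 => /(_ isT).
by rewrite /qform trmxK vM mul0mx mxE ltxx.
Qed.

Lemma BAB (R : realType) (n : nat) (A B : 'M[R]_n) :
  B \in unitmx -> B *m B = A -> B *m invmx A *m B = 1%:M.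
Proof.
move=> Bu BB; have Au : A \in unitmx by rewrite -BB unitmx_mul Bu.
rewrite -{1}[B](mulKmx Bu B) BB -(mulmxA (invmx B) A) mulmxV // mulmx1 mulVmx //.
Qed.

Lemma qform_BW (R : realType) (n : nat) (M B : 'M[R]_n) (y : 'cV[R]_n) :
  B^T *m M *m B = 1%:M -> qform M (B *m y) = (y^T *m y) 0 0.
Proof.
move=> H; rewrite /qform trmx_mul.
transitivity ((y^T *m (B^T *m M *m B) *m y) 0 0); first by rewrite !mulmxA.
by rewrite H mulmx1.
Qed.

Lemma qformZ (R : realType) (n : nat) (M : 'M[R]_n) (c : R) (x : 'cV[R]_n) :
  qform M (c *: x) = c ^+ 2 * qform M x.
Proof. by rewrite /qform !linearZ /= -!scalemxAl scalerA mxE expr2. Qed.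

Definition sv (R : realType) {n : nat} (e : 'I_n -> bool) : 'cV[R]_n :=
  \col_k sgn R (e k).

Lemma vertexE (R : realType) (n : nat) (V : 'M[R]_n) e :
  vertex V e = 2^-1 *: (V *m sv R e).
Proof.
apply/matrixP => k l; rewrite !mxE summxE; congr (_ * _).
by apply: eq_bigr => j _; rewrite !mxE mulrC.
Qed.

Lemma col_nz (R : realType) (n : nat) (W : 'M[R]_n) (k : 'I_n) :
  W \in unitmx -> exists l, W l k != 0.
Proof.
move=> Wu; case: (pickP (fun l => W l k != 0)) => [l Hl|H0]; first by exists l.
exfalso; have := mulVmx Wu; move/matrixP/(_ k k); rewrite !mxE eqxx big1 //=.
  by move/esym/eqP; rewrite oner_eq0.
by move=> l _; have := H0 l; move=> /= /negbFE /eqP ->; rewrite mulr0.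
Qed.

Lemma gram_pos (R : realType) (n : nat) (W : 'M[R]_n) (k : 'I_n) :
  W \in unitmx -> 0 < (W^T *m W) k k.
Proof.
move=> Wu; have [l Hl] := col_nz k Wu.
rewrite mxE (bigD1 l) //= mxE; apply: ltr_wpDr.
  by apply: sumr_ge0 => i _; rewrite mxE -expr2 sqr_ge0.
by rewrite -expr2 lt_def sqr_ge0 andbT sqrf_eq0.
Qed.

Lemma enormE (R : realType) (n : nat) (A B : 'M[R]_n) (c : R) (u : 'cV[R]_n) :
  B^T = B -> B *m B = A -> 0 <= c ->
  enorm (c *: (B *m u)) = c * Num.sqrt (qform A u).
Proof.
move=> BT BB c0; rewrite /enorm /qform !linearZ /= -!scalemxAl scalerA mxE.
rewrite trmx_mul BT mulmxA -(mulmxA u^T B B) BB -expr2 sqrtrM ?sqr_ge0 //.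
by rewrite sqrtr_sqr ger0_norm.
Qed.

Lemma trace_orth (R : realType) (n : nat) (A U : 'M[R]_n) :
  orthogonal_mx U -> \sum_i qform A (col i U) = \tr A.
Proof.
move=> HU; have HU' : U *m U^T = 1%:M by apply: mulmx1C.
transitivity (\tr (U^T *m A *m U)).
  rewrite /mxtrace; apply: eq_bigr => i _.
  by rewrite /qform tr_col -row_mul !mxE; apply: eq_bigr => j _; rewrite !mxE.
by rewrite -mulmxA mxtrace_mulC -mulmxA HU' mulmx1.
Qed.

Lemma offdiag0 (R : realType) (n : nat) (G : 'M[R]_n) :
  (forall k l, G k l = G l k) ->
  (forall e : 'I_n -> bool, bil G (sv R e) (sv R e) = 4) ->
  forall i j, i != j -> G i j = 0.
Proof.
move=> Gs H i j ij.
pose t : 'cV[R]_n := \col_k (if (k == i) || (k == j) then 0 else 1).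
pose eab a b := fun k : 'I_n => if k == i then a else if k == j then b else true.
have Es a b : sv R (eab a b) =
    t + sgn R a *: delta_mx i 0 + sgn R b *: delta_mx j 0.
  apply/matrixP => k l; rewrite (ord1 l) !mxE /eab /=.
  case: (k =P i) => [->|ki].
    by rewrite eqxx (negbTE ij) /=; case: a; rewrite /sgn /=; ring.
  case: (k =P j) => [_|kj] /=; first by case: b; rewrite /sgn /=; ring.
  by rewrite /sgn /=; ring.
have key a b : bil G (t + sgn R a *: delta_mx i 0 + sgn R b *: delta_mx j 0)
   (t + sgn R a *: delta_mx i 0 + sgn R b *: delta_mx j 0) = 4.
  by rewrite -Es; apply: H.
have k1 := key true true; have k2 := key true false.
have k3 := key false true; have k4 := key false false.
move: k1 k2 k3 k4; rewrite /sgn !bilDl !bilDr !bilZl !bilZr !bil_delta (Gs j i).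
lra.
Qed.

Lemma decomp (R : realType) (n : nat) (A B V : 'M[R]_n) :
  B^T = B -> B \in unitmx -> B *m B = A -> V \in unitmx -> inscribed A V ->
  exists (U : 'M[R]_n) (lam : 'I_n -> R),
    [/\ orthogonal_mx U, forall i, 0 < lam i, \sum_(i < n) lam i ^+ 2 = 4
      & forall i, edge V i = lam i *: (B *m col i U)].
Proof.
move=> BT Bu BB Vu Hin.
pose W := invmx B *m V.
have VW : V = B *m W by rewrite /W mulKVmx.
have Wu : W \in unitmx by rewrite /W unitmx_mul unitmx_inv Bu Vu.
pose G := W^T *m W.
have HBMB : B^T *m invmx A *m B = 1%:M by rewrite BT BAB.
have Hq e : bil G (sv R e) (sv R e) = 4.
  have := Hin e; rewrite vertexE qformZ VW -mulmxA qform_BW //.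
  have -> : ((W *m sv R e)^T *m (W *m sv R e)) 0 0 = bil G (sv R e) (sv R e).
    by rewrite /bil /G trmx_mul !mulmxA.
  move=> h; lra.
have Gs k l : G k l = G l k.
  by rewrite !mxE; apply: eq_bigr => m _; rewrite !mxE mulrC.
have Goff := offdiag0 Gs Hq.
have Gpos k : 0 < G k k by apply: gram_pos.
have Hsum : \sum_k G k k = 4.
  have := Hq (fun _ => true); rewrite bil_diag // => <-.
  apply: eq_bigr => k _; have -> : sv R (fun _ => true) k 0 = 1 by rewrite mxE.
  by rewrite expr1n mul1r.
pose lam k := Num.sqrt (G k k).
have lam0 k : 0 < lam k by rewrite sqrtr_gt0.
have lam2 k : lam k ^+ 2 = G k k by rewrite sqr_sqrtr // ltW.
pose U := \matrix_(l, k) (W l k / lam k).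
exists U, lam; split => //.
- apply/matrixP => i j.
  transitivity (G i j * (lam i)^-1 * (lam j)^-1).
    rewrite !mxE mulr_suml mulr_suml; apply: eq_bigr => l _; rewrite !mxE; ring.
  rewrite [in RHS]mxE; case: (i =P j) => [<-|ij].
    by rewrite -lam2 /=; field; apply: lt0r_neq0.
  by rewrite Goff ?mul0r //; apply/eqP.
- by under eq_bigr do rewrite lam2.
- move=> i; rewrite /edge VW colE -mulmxA -colE.
  have -> : col i W = lam i *: col i U.
    by apply/matrixP => k l; rewrite !mxE mulrC divfK // lt0r_neq0.
  by rewrite scalemxAr.
Qed.

Lemma scalar_cs (R : realType) (n : nat) (lam s : 'I_n -> R) (T : R) :
  (forall i, 0 <= lam i) -> (forall i, 0 <= s i) ->
  \sum_i lam i ^+ 2 = 4 -> \sum_i s i ^+ 2 = T -> 0 < T ->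
  \sum_i lam i * s i <= 2 * Num.sqrt T /\
  (\sum_i lam i * s i = 2 * Num.sqrt T <-> exists c, forall i, lam i = c * s i).
Proof.
move=> l0 s0 Hl Hs T0.
set r := Num.sqrt T; set S := \sum_i lam i * s i.
have r0 : 0 < r by rewrite sqrtr_gt0.
have rT : r ^+ 2 = T by rewrite sqr_sqrtr // ltW.
set c0 := 2 / r.
have c0r : c0 * r = 2 by rewrite /c0 divfK // lt0r_neq0.
have key : \sum_i (lam i - c0 * s i) ^+ 2 = 8 - 2 * c0 * S.
  transitivity (\sum_i lam i ^+ 2 - 2 * c0 * S + c0 ^+ 2 * \sum_i s i ^+ 2).
    rewrite /S !mulr_sumr -sumrB -big_split /=; apply: eq_bigr => i _; ring.
  rewrite Hl Hs -rT -exprMn c0r; ring.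
have ge : 0 <= \sum_i (lam i - c0 * s i) ^+ 2 by apply: sumr_ge0 => i _; apply: sqr_ge0.
have S0 : 0 <= S by apply: sumr_ge0 => i _; apply: mulr_ge0.
split.
  have e1 : r * (8 - 2 * c0 * S) = 8 * r - 4 * S by transitivity (8 * r - 2 * (c0 * r) * S); [ring | rewrite c0r; ring].
  have : 0 <= r * (8 - 2 * c0 * S) by rewrite -key; apply: mulr_ge0 => //; exact: ltW.
  rewrite e1 => h; lra.
split.
  move=> HS; exists c0 => i.
  have h0 : \sum_i (lam i - c0 * s i) ^+ 2 = 0.
    rewrite key HS; have : c0 * r = 2 := c0r; nra.
  have := psumr_eq0P (fun j _ => sqr_ge0 (lam j - c0 * s j)) h0.
  move=> /(_ i isT).
  by move/eqP; rewrite sqrf_eq0 subr_eq0 => /eqP.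
case=> c Hc.
have ES : S = c * T.
  by rewrite /S -Hs mulr_sumr; apply: eq_bigr => i _; rewrite Hc; ring.
have EL : c ^+ 2 * T = 4.
  by rewrite -Hl -Hs mulr_sumr; apply: eq_bigr => i _; rewrite Hc; ring.
have S2 : S ^+ 2 = 4 * r ^+ 2 by rewrite ES rT -EL; ring.
nra.
Qed.

Lemma elen (R : realType) (n : nat) (A B V U : 'M[R]_n) (lam : 'I_n -> R) :
  B^T = B -> B *m B = A -> (forall i, 0 <= lam i) ->
  (forall i, edge V i = lam i *: (B *m col i U)) ->
  edge_length V = 2 ^+ n.-1 * \sum_i lam i * Num.sqrt (qform A (col i U)).
Proof.
move=> BT BB l0 He; rewrite /edge_length; congr (_ * _).
by apply: eq_bigr => i _; rewrite He (enormE _ BT BB).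
Qed.

Lemma LmaxE (R : realType) (n : nat) (A : 'M[R]_n) :
  (0 < n)%N -> Lmax A = 2 ^+ n.-1 * (2 * Num.sqrt (\tr A)).
Proof. by move=> n0; rewrite /Lmax -{1}(prednK n0) exprS; ring. Qed.

Lemma col_neq0 (R : realType) (n : nat) (W : 'M[R]_n) (k : 'I_n) :
  W \in unitmx -> col k W != 0.
Proof.
move=> Wu; have [l Hl] := col_nz k Wu; apply/eqP => h.
by move/matrixP: h => /(_ l 0); rewrite !mxE => /eqP; rewrite (negbTE Hl).
Qed.

Lemma sum_pos (R : realType) (n : nat) (F : 'I_n -> R) :
  (0 < n)%N -> (forall i, 0 < F i) -> 0 < \sum_i F i.
Proof.
move=> n0 HF; rewrite (bigD1 (Ordinal n0)) //=; apply: ltr_wpDr => //.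
by apply: sumr_ge0 => i _; apply: ltW.
Qed.

Lemma trA_pos (R : realType) (n : nat) (A : 'M[R]_n) :
  (0 < n)%N -> sym_posdef A -> 0 < \tr A.
Proof.
move=> n0 HA; have H1 : orthogonal_mx (1%:M : 'M[R]_n) by rewrite /orthogonal_mx trmx1 mul1mx.
rewrite -(trace_orth A H1); apply: sum_pos => // i.
by apply: (proj2 HA); apply: col_neq0; apply: unitmx1.
Qed.

Lemma build (R : realType) (n : nat) (A B U V : 'M[R]_n) (lam : 'I_n -> R) :
  B^T = B -> B \in unitmx -> B *m B = A -> orthogonal_mx U ->
  (forall i, 0 < lam i) -> \sum_i lam i ^+ 2 = 4 ->
  (forall i, edge V i = lam i *: (B *m col i U)) ->
  V \in unitmx /\ inscribed A V.
Proof.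
move=> BT Bu BB HU l0 Hl He.
pose d : 'rV[R]_n := \row_i lam i.
pose W := U *m diag_mx d.
have VW : V = B *m W.
  apply/matrixP => k i; move/matrixP: (He i) => /(_ k 0); rewrite /edge !mxE => ->.
  rewrite mulr_sumr; apply: eq_bigr => j _; rewrite /W mul_mx_diag !mxE; ring.
have Uu : U \in unitmx by case: (mulmx1_unit HU).
split.
  rewrite VW !unitmx_mul Bu Uu unitmxE det_diag unitfE lt0r_neq0 //.
  by apply: prodr_gt0 => i _; rewrite mxE.
move=> e; rewrite vertexE qformZ VW -mulmxA qform_BW; last by rewrite BT BAB.
have HG : W^T *m W = diag_mx d *m diag_mx d.
  by rewrite /W trmx_mul tr_diag_mx -mulmxA (mulmxA U^T) HU mul1mx.
have -> : ((W *m sv R e)^T *m (W *m sv R e)) 0 0 = bil (W^T *m W) (sv R e) (sv R e).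
  by rewrite /bil trmx_mul !mulmxA.
rewrite HG bil_diag; last first.
  by move=> k l kl; rewrite mul_diag_mx !mxE (negbTE kl) mulr0n mulr0.
have -> : \sum_k sv R e k 0 ^+ 2 * (diag_mx d *m diag_mx d) k k = 4.
  rewrite -Hl; apply: eq_bigr => k _; rewrite mul_diag_mx !mxE eqxx mulr1n.
  by case: (e k); rewrite /sgn /=; ring.
lra.
Qed.
Unset Implicit Arguments.

Theorem theorem3p1 (R : realType) (n : nat) (A B : 'M[R]_n) :
  (2 <= n)%N ->
  sym_posdef A ->
  (* B = A^{1/2}: the symmetric positive definite square root of A *)
  sym_posdef B -> B *m B = A ->
  (* (i) upper bound *)
  (forall V : 'M[R]_n, V \in unitmx -> inscribed A V ->
     edge_length V <= Lmax A)
  /\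
  (* (ii) characterization of equality *)
  (forall V : 'M[R]_n, V \in unitmx -> inscribed A V ->
     (edge_length V = Lmax A <->
      exists (U : 'M[R]_n) (lam : 'I_n -> R),
        [/\ orthogonal_mx U,
            forall i, 0 < lam i,
            \sum_(i < n) lam i ^+ 2 = 4,
            (exists c : R, forall i,
                 lam i = c * Num.sqrt (qform A (col i U)))
          & forall i, edge V i = lam i *: (B *m col i U)]))
  /\
  (* (iii) the explicit extremal choice *)
  (forall U : 'M[R]_n, orthogonal_mx U ->
     let lam := fun i : 'I_n =>
       2 * Num.sqrt (qform A (col i U)) / Num.sqrt (\tr A) in
     let V := \matrix_(j < n, i < n) (lam i *: (B *m col i U)) j 0 in
     [/\ V \in unitmx, inscribed A V & edge_length V = Lmax A]).

Proof.
move=> n2 HA HB BB; have [BT _] := HB.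
have Bu := posdef_unit HB.
have n0 : (0 < n)%N by apply: leq_trans n2.
have T0 := trA_pos n0 HA.
have qpos U i : orthogonal_mx U -> 0 < qform A (col i U).
  move=> HU; apply: (proj2 HA); apply: col_neq0.
  by case: (mulmx1_unit HU).
have Hsq U : orthogonal_mx U ->
    \sum_i Num.sqrt (qform A (col i U)) ^+ 2 = \tr A.
  move=> HU; rewrite -(trace_orth A HU); apply: eq_bigr => i _.
  by rewrite sqr_sqrtr // ltW // qpos.
have p0 : 0 < (2 : R) ^+ n.-1 by apply: exprn_gt0.
split.
  move=> V Vu Hin; have [U [lam [HU l0 Hl He]]] := decomp BT Bu BB Vu Hin.
  rewrite (elen BT BB (fun i => ltW (l0 i)) He) LmaxE //.
  rewrite ler_pM2l //.
  exact: (scalar_cs (fun i => ltW (l0 i)) (fun i => sqrtr_ge0 _) Hl (Hsq U HU) T0).1.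
split.
  move=> V Vu Hin; split.
    move=> HE; have [U [lam [HU l0 Hl He]]] := decomp BT Bu BB Vu Hin.
    exists U, lam; split => //.
    apply: (scalar_cs (fun i => ltW (l0 i)) (fun i => sqrtr_ge0 _) Hl (Hsq U HU) T0).2.1.
    move: HE; rewrite (elen BT BB (fun i => ltW (l0 i)) He) LmaxE //.
    by move/(mulfI (lt0r_neq0 p0)).
  case=> U [lam [HU l0 Hl Hc He]].
  rewrite (elen BT BB (fun i => ltW (l0 i)) He) LmaxE //; congr (_ * _).
  exact: (scalar_cs (fun i => ltW (l0 i)) (fun i => sqrtr_ge0 _) Hl (Hsq U HU) T0).2.2.
move=> U HU lam V.
have sT0 : 0 < Num.sqrt (\tr A) by rewrite sqrtr_gt0.
have l0 i : 0 < lam i.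
  by rewrite /lam divr_gt0 // mulr_gt0 // sqrtr_gt0 qpos.
have He i : edge V i = lam i *: (B *m col i U).
  by apply/matrixP => k l; rewrite /edge (ord1 l) !mxE.
have Hl : \sum_i lam i ^+ 2 = 4.
  transitivity (\sum_i 4 * qform A (col i U) / \tr A).
    apply: eq_bigr => i _; rewrite /lam expr_div_n exprMn sqr_sqrtr ?sqr_sqrtr ?ltW ?qpos //.
    ring.
  rewrite -mulr_suml -mulr_sumr trace_orth //; field.
  exact: lt0r_neq0.
have [Vu Hin] := build BT Bu BB HU l0 Hl He.
split => //.
rewrite (elen BT BB (fun i => ltW (l0 i)) He) LmaxE //; congr (_ * _).
apply: (scalar_cs (fun i => ltW (l0 i)) (fun i => sqrtr_ge0 _) Hl (Hsq U HU) T0).2.2.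
by exists (2 / Num.sqrt (\tr A)) => i; rewrite /lam mulrAC.
Qed.
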